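(* Let $P(Y)\in R[Y]$ be $m$-triangular and let $Q(Y)\in R[Y]$ be linear. Then: (0) for every $q\in\mathbb{Q}_+$, $qP(Y)$ is $m$-triangular and $qQ(Y)$ is linear; (1) if $\deg P(Y)\ge a+1$, then $P'(Y)$ is $m$-triangular; (2) if $Q(Y)$ is nonconstant, then $Q'(Y)$ is linear; (3) $P(Y)Q(Y)$ is $(m+1)$-triangular.
   Context: Fix a positive integer $a$ and variables $u_0,\ldots,u_a$. Let $R=\mathbb{C}[u_0,\ldots,u_{a-1}][u_a,u_a^{-1}]$. $\mathbb{Q}_+$ denotes the positive rational numbers. For an integer $m\ge1$, a polynomial $P(Y)=\sum_{l=0}^dp_lY^l\in R[Y]$ of degree $d\ge a$ is called $m$-triangular if for every $l$ with $d-a\le l\le d$ one has $p_l=q_lu_a^{m-1}u_{a-d+l}+P_l(u_{a-d+l+1},\ldots,u_a)$ for some $q_l\in\mathbb{Q}_+$ and some polynomial $P_l\in\mathbb{C}[u_{a-d+l+1},\ldots,u_a]$ (for $l=d$ this means $p_d=q_du_a^m$). A polynomial $P(Y)=\sum_{l=0}^dp_lY^l\in R[Y]$ is called linear (or $U$-linear) if $0\le d=\deg P(Y)\le a$ and $p_l\in\mathbb{Q}_+u_{a-d+l}$ for all $l\in\{0,\ldots,d\}$. Derivatives are with respect to $Y$. *)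

(* Defs.v *)
From HB Require Import structures.
From mathcomp Require Import all_boot all_order all_algebra.
From mathcomp Require Import mpoly.
From mathcomp Require Import complex.
From mathcomp Require Import Rstruct.
From mathcomp Require Import fraction.
Set Implicit Arguments. Unset Strict Implicit. Unset Printing Implicit Defensive.
Import Order.TTheory GRing.Theory Num.Theory.
Local Open Scope ring_scope.

Definition CC : Type := complex Rdefinitions.R.

(* Polynomial ring C[u_0,...,u_a] in a+1 variables; u_j is 'X_j. *)
Definition Pol (a : nat) := {mpoly CC[a.+1]}.

(* Its field of fractions; R = C[u_0..u_{a-1}][u_a,u_a^{-1}] is realised as
   the subring of elements f such that f * u_a^k is a polynomial for some k. *)
Definition Frac (a : nat) := {fraction (Pol a)}.

Definition emb (a : nat) (p : Pol a) : Frac a := FracField.tofrac p.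

Definition uvar (a j : nat) : Pol a := 'X_(inord j).

Definition ufrac (a j : nat) : Frac a := emb (uvar a j).

Definition inR (a : nat) (f : Frac a) : Prop :=
  exists (k : nat) (p : Pol a), f * (ufrac a a) ^+ k = emb p.

Definition inRY (a : nat) (P : {poly Frac a}) : Prop :=
  forall l, inR (P`_l).

Definition vars_above (a j : nat) (p : Pol a) : Prop :=
  forall (mon : 'X_{1..a.+1}), mon \in msupp p ->
    forall i : 'I_a.+1, (i <= j)%N -> mon i = 0%N.

(* m-triangular polynomial, with d = deg P = (size P).-1 and the coefficient
   index a-d+l written as l - (d - a) (a natural number since d >= a and
   l >= d - a). *)
Definition triangular (a m : nat) (P : {poly Frac a}) : Prop :=
  inRY P /\
  exists d : nat, size P = d.+1 /\ (a <= d)%N /\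
   forall l : nat, ((d - a)%N <= l)%N -> (l <= d)%N ->
     exists q : rat, 0 < q /\
       (l = d -> P`_l = ratr q * ufrac a a ^+ m) /\
       ((l < d)%N -> exists Pl : Pol a, vars_above (l - (d - a))%N Pl /\
          P`_l = ratr q * ufrac a a ^+ m.-1 * ufrac a (l - (d - a))%N + emb Pl).

Definition ulinear (a : nat) (Q : {poly Frac a}) : Prop :=
  exists d : nat, size Q = d.+1 /\ (d <= a)%N /\
   forall l : nat, (l <= d)%N ->
     exists q : rat, 0 < q /\ Q`_l = ratr q * ufrac a (l + (a - d))%N.

Arguments triangular a m P : clear implicits.

(* Main.v *)
Require Import Defs.
From HB Require Import structures.
From mathcomp Require Import all_boot all_order all_algebra.
From mathcomp Require Import mpoly complex fraction Rstruct ring zify.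
Import Order.TTheory GRing.Theory Num.Theory.
Local Open Scope ring_scope.

Section Helpers.
Variable a : nat.

Definition cst (c : CC) : Pol a := c%:MP.

Lemma embD (p q : Pol a) : emb (p + q) = emb p + emb q.
Proof. exact: rmorphD. Qed.
Lemma embM (p q : Pol a) : emb (p * q) = emb p * emb q.
Proof. exact: rmorphM. Qed.
Lemma emb0 : emb (0 : Pol a) = 0.
Proof. exact: rmorph0. Qed.
Lemma emb1 : emb (1 : Pol a) = 1.
Proof. exact: rmorph1. Qed.
Lemma embX (p : Pol a) n : emb (p ^+ n) = emb p ^+ n.
Proof. exact: rmorphXn. Qed.

Lemma ratrE (q : rat) : ratr q = emb (cst (ratr q)) :> Frac a.
Proof.
have := @fmorph_rat CC (Frac a) ((@FracField.tofrac (Pol a)) \o (@mpolyC _ CC)) q.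
by rewrite /emb /cst /= => ->.
Qed.

Lemma ratrM (x y : rat) : ratr (x * y) = ratr x * ratr y :> Frac a.
Proof. rewrite !ratrE -embM /cst; congr emb; rewrite -mpolyCM; congr mpolyC; exact: rmorphM. Qed.
Lemma ratrD (x y : rat) : ratr (x + y) = ratr x + ratr y :> Frac a.
Proof. rewrite !ratrE -embD /cst; congr emb; rewrite -mpolyCD; congr mpolyC; exact: rmorphD. Qed.
Lemma ratr0 : ratr 0 = 0 :> Frac a.
Proof. by rewrite ratrE /cst rmorph0 /= rmorph0 emb0. Qed.
Lemma ratr_neq0 (x : rat) : x != 0 -> ratr x != 0 :> Frac a.
Proof.
move=> nx; rewrite ratrE /emb tofrac_eq0 /cst mpolyC_eq0 fmorph_eq0 //.
Qed.
Lemma mulrn_ratr (x : Frac a) n : x *+ n = x * ratr n%:R.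
Proof. by rewrite ratr_nat mulr_natr. Qed.

Lemma ufrac_neq0 j : ufrac a j != 0.
Proof.
rewrite /ufrac /emb tofrac_eq0 /uvar; apply/eqP => h.
by have := @msuppX a.+1 CC (U_(@inord a j))%MM; rewrite h msupp0.
Qed.

Definition VA j (x : Frac a) := exists p, vars_above j p /\ x = emb p.

Lemma VA0 j : VA j 0.
Proof. by exists 0; split; [move=> mon; rewrite msupp0 | rewrite emb0]. Qed.

Lemma VAD j x y : VA j x -> VA j y -> VA j (x + y).
Proof.
move=> [p [hp ->]] [q [hq ->]]; exists (p + q); split; last by rewrite embD.
move=> mon /msuppD_le; rewrite mem_cat => /orP [] h i hi; [exact: hp | exact: hq].
Qed.

Lemma VAM j x y : VA j x -> VA j y -> VA j (x * y).
Proof.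
move=> [p [hp ->]] [q [hq ->]]; exists (p * q); split; last by rewrite embM.
move=> mon /msuppM_le /allpairsP [[m1 m2] [/= h1 h2 ->]] i hi.
by rewrite mnmDE (hp _ h1 _ hi) (hq _ h2 _ hi).
Qed.

Lemma VAC j c : VA j (emb (cst c)).
Proof.
exists (cst c); split => // mon; rewrite /cst msuppC.
by case: (c == 0) => //; rewrite inE => /eqP -> i _; rewrite mnm0E.
Qed.

Lemma VA1 j : VA j 1.
Proof. by have := VAC j 1; rewrite /cst rmorph1 /= emb1. Qed.

Lemma VAratr j q : VA j (ratr q).
Proof. rewrite ratrE; exact: VAC. Qed.

Lemma VAX j x n : VA j x -> VA j (x ^+ n).
Proof. by move=> h; elim: n => [|n IH]; [rewrite expr0; exact: VA1 | rewrite exprS; exact: VAM]. Qed.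

Lemma VAu j i : (j < i)%N -> (i <= a)%N -> VA j (ufrac a i).
Proof.
move=> ji ia; exists (uvar a i); split => // mon; rewrite /uvar msuppX inE => /eqP -> k hk.
rewrite mnm1E; apply/eqP; rewrite eqb0; apply/eqP => e.
by move: hk; rewrite -e inordK //; lia.
Qed.

Lemma VAW j j' x : (j' <= j)%N -> VA j x -> VA j' x.
Proof.
move=> h [p [hp ->]]; exists p; split => // mon hm i hi; apply: hp => //; lia.
Qed.

Lemma inR_emb p : @inR a (emb p).
Proof. by exists 0%N, p; rewrite expr0 mulr1. Qed.

Lemma inRD x y : inR x -> inR y -> @inR a (x + y).
Proof.
move=> [k1 [p1 h1]] [k2 [p2 h2]]; exists (k1 + k2)%N, (p1 * uvar a a ^+ k2 + p2 * uvar a a ^+ k1).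
rewrite embD !embM !embX -h1 -h2 /ufrac exprD; ring.
Qed.

Lemma inRM x y : inR x -> inR y -> @inR a (x * y).
Proof.
move=> [k1 [p1 h1]] [k2 [p2 h2]]; exists (k1 + k2)%N, (p1 * p2).
rewrite embM -h1 -h2 exprD; ring.
Qed.

Lemma inR0 : @inR a 0.
Proof. by rewrite -emb0; apply: inR_emb. Qed.
Lemma inR_ratr q : @inR a (ratr q).
Proof. rewrite ratrE; exact: inR_emb. Qed.
Lemma inR_u j : @inR a (ufrac a j).
Proof. exact: inR_emb. Qed.
Lemma inRX x n : inR x -> @inR a (x ^+ n).
Proof. by move=> h; elim: n => [|n IH]; [rewrite expr0 -emb1; exact: inR_emb | rewrite exprS; exact: inRM]. Qed.
Lemma inRMn x n : inR x -> @inR a (x *+ n).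
Proof. by move=> h; rewrite mulrn_ratr; apply: inRM => //; apply: inR_ratr. Qed.

Lemma size_eq (p : {poly Frac a}) n : p`_n != 0 -> (forall i, (n < i)%N -> p`_i = 0) -> size p = n.+1.
Proof.
move=> nz hi; apply/eqP; rewrite eqn_leq; apply/andP; split.
  by apply/leq_sizeP => j hj; apply: hi.
rewrite ltnNge; apply/negP => /leq_sizeP h; by rewrite h ?eqxx in nz.
Qed.

Lemma rpos_neq0 (r : rat) : 0 < r -> ratr r != 0 :> Frac a.
Proof. by move=> r0; apply: ratr_neq0; rewrite gt_eqF. Qed.

Lemma tri_scale m (P : {poly Frac a}) r : 0 < r -> triangular a m P -> triangular a m (ratr r *: P).
Proof.
move=> r0 [hR [d [hs [had hP]]]].
split. by move=> l; rewrite coefZ; apply: inRM; [exact: inR_ratr | exact: hR].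
exists d; split; first by rewrite size_scale ?rpos_neq0.
split=> // l h1 h2; have [q [q0 [hl hl']]] := hP l h1 h2.
exists (r * q); split; first exact: mulr_gt0.
split. by move=> e; rewrite coefZ hl // ratrM; ring.
move=> lt; have [Pl [hv hPl]] := hl' lt.
have : VA (l - (d - a)) (ratr r * emb Pl) by apply: VAM; [exact: VAratr | exists Pl].
by move=> [p [hp ep]]; exists p; split => //; rewrite coefZ hPl -ep ratrM; ring.
Qed.

Lemma lin_scale (Q : {poly Frac a}) r : 0 < r -> ulinear Q -> ulinear (ratr r *: Q).
Proof.
move=> r0 [e [hs [hea hQ]]]; exists e; split; first by rewrite size_scale ?rpos_neq0.
split=> // l hl; have [q [q0 hq]] := hQ l hl.
exists (r * q); split; first exact: mulr_gt0.
by rewrite coefZ hq ratrM; ring.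
Qed.

Lemma natpos (n : nat) : (0 < n)%N -> 0 < (n%:R : rat).
Proof. by rewrite ltr0n. Qed.

Lemma tri_deriv m (P : {poly Frac a}) : triangular a m P -> (a.+1 <= (size P).-1)%N -> triangular a m P^`().
Proof.
move=> [hR [d [hs [had hP]]]]; rewrite hs /= => hd.
split. by move=> l; rewrite coef_deriv; apply: inRMn; exact: hR.
exists d.-1.
split.
  apply: size_eq.
    rewrite coef_deriv prednK; last lia.
    have [q [q0 [hl _]]] := hP d (leq_subr _ _) (leqnn d).
    rewrite hl // mulrn_ratr; apply: mulf_neq0; last by apply: rpos_neq0; apply: natpos; lia.
    by apply: mulf_neq0; [exact: rpos_neq0 | apply: expf_neq0; exact: ufrac_neq0].
  by move=> i hi; rewrite coef_deriv nth_default ?mul0rn // hs; lia.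
split; first lia.
move=> l h1 h2; have [q [q0 [hl hl']]] := hP l.+1 ltac:(lia) ltac:(lia).
exists (q * l.+1%:R); split; first by apply: mulr_gt0 => //; apply: natpos.
split. by move=> e; rewrite coef_deriv hl; [rewrite mulrn_ratr ratrM; ring | lia].
move=> lt; have [Pl [hv hPl]] := hl' ltac:(lia).
have -> : (l - (d.-1 - a))%N = (l.+1 - (d - a))%N by lia.
have : VA (l.+1 - (d - a)) (emb Pl * ratr l.+1%:R) by apply: VAM; [exists Pl | apply: VAratr].
by move=> [p [hp ep]]; exists p; split => //; rewrite coef_deriv hPl mulrn_ratr -ep ratrM; ring.
Qed.

Lemma lin_deriv (Q : {poly Frac a}) : ulinear Q -> (1 < size Q)%N -> ulinear Q^`().
Proof.
move=> [e [hs [hea hQ]]]; rewrite hs => he.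
exists e.-1; split.
  apply: size_eq.
    rewrite coef_deriv prednK; last lia.
    have [q [q0 ->]] := hQ e (leqnn e).
    rewrite mulrn_ratr; apply: mulf_neq0; last by apply: rpos_neq0; apply: natpos; lia.
    by apply: mulf_neq0; [exact: rpos_neq0 | exact: ufrac_neq0].
  by move=> i hi; rewrite coef_deriv nth_default ?mul0rn // hs; lia.
split; first lia.
move=> l hl; have [q [q0 hq]] := hQ l.+1 ltac:(lia).
exists (q * l.+1%:R); split; first by apply: mulr_gt0 => //; apply: natpos.
rewrite coef_deriv hq mulrn_ratr ratrM.
have -> : (l + (a - e.-1))%N = (l.+1 + (a - e))%N by lia.
ring.
Qed.

Lemma tri_mul m (P Q : {poly Frac a}) : (1 <= m)%N -> triangular a m P -> ulinear Q ->
  triangular a m.+1 (P * Q).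
Proof.
move=> m1 [hR [d [hs [had hP]]]] [e [hsQ [hea hQ]]].
have QR : forall l, @inR a (Q`_l).
  move=> l; case: (leqP l e) => hl.
    have [q [_ ->]] := hQ l hl; apply: inRM; [exact: inR_ratr | exact: inR_u].
  by rewrite nth_default ?hsQ //; exact: inR0.
split.
  move=> l; rewrite coefM; apply: (big_ind (@inR a)); [exact: inR0 | exact: inRD |].
  by move=> i _; apply: inRM; [exact: hR | exact: QR].
have [qd [qd0 [Pd _]]] := hP d (leq_subr _ _) (leqnn d).
have [qe [qe0 Qe]] := hQ e (leqnn e).
have Ea : (e + (a - e))%N = a by lia.
rewrite Ea in Qe.
have Pn : P != 0 by rewrite -size_poly_gt0 hs.
have Qn : Q != 0 by rewrite -size_poly_gt0 hsQ.
have lc : (P * Q)`_(d + e) = P`_d * Q`_e.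
  have := mul_lead_coef P Q; rewrite /lead_coef hs hsQ /=.
  by have -> : ((d.+1 + e.+1).-2 = d + e)%N by lia.
exists (d + e)%N.
split; first by rewrite size_mul // hs hsQ addSn addnS.
split; first lia.
move=> L h1 h2.
case: (ltngtP L (d + e)) => [ltL | gtL | eqL]; last first.
- exists (qd * qe); split; first exact: mulr_gt0.
  split; last by move=> lt; exfalso; lia.
  by move=> _; rewrite eqL lc Pd // Qe ratrM exprS; ring.
- by exfalso; lia.
set k := (L - (d + e - a))%N.
pose u := ufrac a.
pose Fk (x : Frac a) := exists r : rat, 0 <= r /\ exists y, VA k y /\ x = ratr r * u a ^+ m * u k + y.
pose Fkp (x : Frac a) := exists r : rat, 0 < r /\ exists y, VA k y /\ x = ratr r * u a ^+ m * u k + y.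
have em : u a ^+ m = u a ^+ m.-1 * u a by rewrite -exprSr prednK.
have Fk0 : Fk 0 by exists 0; split => //; exists 0; split; [exact: VA0 | rewrite ratr0; ring].
have FkD : forall x y, Fk x -> Fk y -> Fk (x + y).
  move=> x y [r1 [r10 [y1 [v1 ->]]]] [r2 [r20 [y2 [v2 ->]]]].
  exists (r1 + r2); split; first exact: addr_ge0.
  by exists (y1 + y2); split; [exact: VAD | rewrite ratrD; ring].
have FkpD : forall x y, Fkp x -> Fk y -> Fkp (x + y).
  move=> x y [r1 [r10 [y1 [v1 ->]]]] [r2 [r20 [y2 [v2 ->]]]].
  exists (r1 + r2); split; first exact: ltr_wpDr.
  by exists (y1 + y2); split; [exact: VAD | rewrite ratrD; ring].
have term : forall i, (i <= L)%N ->
    Fk (P`_i * Q`_(L - i)) /\ ((L - i)%N = e -> Fkp (P`_i * Q`_(L - i))).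
  move=> i iL.
  case: (leqP (L - i) e) => hj; last first.
    by rewrite (nth_default 0 (_ : (size Q <= L - i)%N)) ?hsQ // mulr0; split=> // ?; lia.
  case: (leqP i d) => hi; last first.
    by rewrite (nth_default 0 (_ : (size P <= i)%N)) ?hs // mul0r; split=> // ?; lia.
  have [q' [q'0 hq']] := hQ (L - i)%N hj.
  have [q [q0 [hl hl']]] := hP i ltac:(lia) hi.
  case: (ltngtP i d) => [ltid | gtid | eqid]; last first.
  - split; last by move=> ?; exfalso; lia.
    rewrite hl // hq'; exists (q * q'); split; first by apply: ltW; exact: mulr_gt0.
    exists 0; split; first exact: VA0.
    have -> : (L - i + (a - e))%N = k by rewrite /k; lia.
    by rewrite ratrM /u; ring.
  - by exfalso; lia.
  have [Pl [hv hPl]] := hl' ltid.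
  rewrite hPl hq'.
  case: (eqVneq (L - i)%N e) => [je | jne].
    have ek : (i - (d - a))%N = k by rewrite /k; lia.
    have ea : (L - i + (a - e))%N = a by lia.
    have kp : Fkp ((ratr q * ufrac a a ^+ m.-1 * ufrac a (i - (d - a)) + emb Pl) *
                   (ratr q' * ufrac a (L - i + (a - e)))).
      exists (q * q'); split; first exact: mulr_gt0.
      exists (emb Pl * (ratr q' * u a)); split.
        apply: VAM; first by exists Pl; rewrite -ek.
        by apply: VAM; [exact: VAratr | apply: VAu; rewrite /k; lia].
      by rewrite ek ea em ratrM /u; ring.
    split=> // ; have [r [r0 [y [vy ey]]]] := kp.
    by exists r; split; [exact: ltW | exists y].
  split; last by move=> /eqP; rewrite (negbTE jne).
  exists 0; split => //.
  eexists; split; last by rewrite ratr0 mul0r mul0r add0r.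
  apply: VAM; last by apply: VAM; [exact: VAratr | apply: VAu; rewrite /k; lia].
  apply: VAD; last by apply: (@VAW (i - (d - a))%N); [rewrite /k; lia | exists Pl].
  apply: VAM; last by apply: VAu; rewrite /k; lia.
  apply: VAM; first exact: VAratr.
  by apply: VAX; apply: VAu; rewrite /k; lia.
have i0lt : (L - e < L.+1)%N by lia.
have main : Fkp ((P * Q)`_L).
  rewrite coefM (bigD1 (Ordinal i0lt)) //=.
  apply: FkpD.
    have [_ h] := term (L - e)%N (leq_subr _ _); apply: h; lia.
  apply: (big_ind Fk) => //.
  move=> i _; have iL : (i <= L)%N by rewrite -ltnS ltn_ord.
  by have [h _] := term i iL.
have [r [r0 [y [[p [hp ep]] ey]]]] := main.
exists r; split => //; split; first by move=> eL; exfalso; lia.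
by move=> _; exists p; split => //; rewrite ey ep.
Qed.

End Helpers.

Theorem mainTheorem4 (a m : nat) (P Q : {poly Frac a}) :
  (0 < a)%N -> (1 <= m)%N ->
  triangular a m P -> ulinear Q ->
  (forall q : rat, 0 < q ->
      triangular a m (ratr q *: P) /\ ulinear (ratr q *: Q)) /\
  ((a.+1 <= (size P).-1)%N -> triangular a m P^`()) /\
  ((1 < size Q)%N -> ulinear Q^`()) /\
  triangular a m.+1 (P * Q).
Proof.
move=> a0 m1 hP hQ; split.
  by move=> q q0; split; [exact: tri_scale | exact: lin_scale].
split; first by move=> h; exact: tri_deriv.
split; first by move=> h; exact: lin_deriv.
exact: tri_mul.
Qed.
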